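(* Let $n\ge 3$ be an odd integer and $k\ge 3$ an integer. Then $\psi(C_n\square P_k)=3$, i.e. the minimum size of a doubly resolving set of the cartesian product $C_n\square P_k$ is $3$.
   Context: All graphs are finite and connected; $d(u,v)$ is the shortest-path distance. $C_n$ is the cycle on $n$ vertices and $P_k$ the path on $k$ vertices. The cartesian product $G\square H$ has vertex set $V(G)\times V(H)$, with $(g_1,h_1)$ adjacent to $(g_2,h_2)$ iff either $h_1=h_2$ and $g_1g_2\in E(G)$, or $g_1=g_2$ and $h_1h_2\in E(H)$. For an ordered set $Q=\{q_1,\dots,q_l\}$ of vertices, $r(x|Q)=(d(x,q_1),\dots,d(x,q_l))$. $Q$ is a doubly resolving set of $G$ if for any two distinct vertices $x,y$ of $G$, $r(x|Q)-r(y|Q)\neq\lambda(1,\dots,1)$ for every integer $\lambda$. $\psi(G)$ denotes the minimum size of a doubly resolving set of $G$. *)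

(* Defs.v *)
From mathcomp Require Import all_boot all_order all_algebra.
Set Implicit Arguments. Unset Strict Implicit. Unset Printing Implicit Defensive.
Import GRing.Theory Num.Theory.

(* A graph is a (symmetric, irreflexive) adjacency relation e on a finite
   vertex type T. *)

Definition walk_len {T : finType} (e : rel T) (m : nat) (u v : T) : bool :=
  [exists p : m.-tuple T, path e u p && (last u p == v)].

(* Shortest-path distance: the least m such that a walk of length m from u
   to v exists (searched over 0..#|T|-1, which suffices in a connected
   graph: a shortest path has at most #|T|-1 edges). *)
Definition gdist {T : finType} (e : rel T) (u v : T) : nat :=
  find (fun m => walk_len e m u v) (iota 0 #|T|).

Definition cycle_rel (n : nat) : rel 'I_n :=
  fun i j => ((i.+1 %% n) == j) || ((j.+1 %% n) == i).

Definition path_rel (k : nat) : rel 'I_k :=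
  fun i j => (i.+1 == j) || (j.+1 == i).

Definition cart_rel {T1 T2 : finType} (e1 : rel T1) (e2 : rel T2)
  : rel (T1 * T2) :=
  fun x y => ((x.2 == y.2) && e1 x.1 y.1) || ((x.1 == y.1) && e2 x.2 y.2).

Definition doubly_resolving {T : finType} (e : rel T) (Q : {set T}) : Prop :=
  forall x y : T, x != y ->
    ~ (exists lam : int, forall q, q \in Q ->
          ((gdist e x q)%:Z - (gdist e y q)%:Z)%R = lam).

Definition psi_eq {T : finType} (e : rel T) (m : nat) : Prop :=
  (exists Q : {set T}, doubly_resolving e Q /\ #|Q| = m) /\
  (forall Q : {set T}, doubly_resolving e Q -> m <= #|Q|).

(* Main.v *)
Require Import Defs.
From mathcomp Require Import all_boot all_order all_algebra zify.

Section G.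
Variables (T:finType) (e: rel T) (D: T -> T -> nat) (v:T).
Hypotheses (D0: D v v = 0) (Dz: forall u, D u v = 0 -> u = v)
  (Dedge: forall u w, e u w -> D u v <= (D w v).+1)
  (Dnb: forall u m, D u v = m.+1 -> exists w, e u w && (D w v == m))
  (Dlt: forall u, D u v < #|T|).

Lemma walk_lb p u : path e u p -> D u v <= size p + D (last u p) v.
Proof.
elim: p u => [|w p IH] u /=; first by [].
move/andP=> [euw pw]. have:= IH _ pw. have:= Dedge _ _ euw. lia.
Qed.

Lemma walk_ex m : forall u, D u v = m -> walk_len e m u v.
Proof.
elim: m => [|m IH] u Hu.
  rewrite (Dz _ Hu). apply/existsP; exists [tuple]; by rewrite /= eqxx.
have [w /andP[euw /eqP Hw]] := Dnb _ _ Hu.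
have /existsP[p /andP[pp lp]] := IH _ Hw.
apply/existsP; exists (cons_tuple w p) => /=. by rewrite euw pp lp.
Qed.

Lemma gdistE u : gdist e u v = D u v.
Proof.
rewrite /gdist.
have hP: has (fun m => walk_len e m u v) (iota 0 #|T|).
  apply/hasP; exists (D u v); first by rewrite mem_iota add0n Dlt.
  exact: walk_ex.
have f_lt := hP; rewrite has_find size_iota in f_lt.
have := nth_find 0 hP. rewrite nth_iota // add0n => /existsP[p /andP[pp /eqP lp]].
have := walk_lb _ _ pp. rewrite lp D0 size_tuple addn0 => lb.
apply/eqP; rewrite eqn_leq lb andbT leqNgt; apply/negP => lt.
have := before_find 0 lt. rewrite nth_iota ?add0n; last by lia.
by rewrite walk_ex.
Qed.
End G.

Definition absd (i j : nat) := (i - j) + (j - i).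
Definition dc n i j := minn (absd i j) (n - absd i j).

Section DC.
Variable n : nat.
Lemma dc_le1 i t : i <= t -> (t - i).*2 <= n -> dc n i t = t - i.
Proof. rewrite /dc /absd; lia. Qed.
Lemma dc_le2 i t : i <= t -> n < (t - i).*2 -> t < n -> dc n i t = n - (t - i).
Proof. rewrite /dc /absd; lia. Qed.
Lemma dc_ge1 i t : t <= i -> (i - t).*2 <= n -> dc n i t = i - t.
Proof. rewrite /dc /absd; lia. Qed.
Lemma dc_ge2 i t : t <= i -> n < (i - t).*2 -> i < n -> dc n i t = n - (i - t).
Proof. rewrite /dc /absd; lia. Qed.

Lemma cyc_nb_nat i t m : i < n -> t < n -> dc n i t = m.+1 ->
  exists j, [/\ j < n, dc n j t = m &
    [\/ j = i.+1, i.+1 = n /\ j = 0, i = j.+1 | j.+1 = n /\ i = 0]].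
Proof.
move=> hi ht H.
case: (ltngtP i t) => hit; last first.
- move: H; rewrite hit /dc /absd; lia.
- case: (leqP ((i - t).*2) n) => ha.
  + rewrite dc_ge1 in H; try lia.
    exists i.-1; split; [lia| rewrite dc_ge1; lia | constructor 3; lia].
  + rewrite dc_ge2 in H; try lia.
    case: (ltnP i.+1 n) => hi1.
    * exists i.+1; split; [lia| rewrite dc_ge2; lia | constructor 1; lia].
    * exists 0; split; [lia| rewrite dc_le1; lia | constructor 2; lia].
- case: (leqP ((t - i).*2) n) => ha.
  + rewrite dc_le1 in H; try lia.
    exists i.+1; split; [lia| rewrite dc_le1; lia | constructor 1; lia].
  + rewrite dc_le2 in H; try lia.
    case: (posnP i) => hi0.
    * exists n.-1; split; [lia| rewrite dc_ge1; lia | constructor 4; lia].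
    * exists i.-1; split; [lia| rewrite dc_le2; lia | constructor 3; lia].
Qed.

Lemma dc0 i : i < n -> dc n i 0 = if i.*2 <= n then i else n - i.
Proof. move=> hi; rewrite /dc /absd; case: ifP => h; lia. Qed.

Lemma dch i : odd n -> i < n -> dc n i n./2 = if i <= n./2 then n./2 - i else i - n./2.
Proof.
move=> ho hi; have := odd_double_half n; rewrite ho => hn.
rewrite /dc /absd; case: ifP => h; lia. Qed.

Lemma ginj (i i' : nat) : odd n -> i < n -> i' < n ->
  dc n i 0 + dc n i' n./2 = dc n i' 0 + dc n i n./2 -> i = i'.
Proof.
move=> ho hi hi'; have := odd_double_half n; rewrite ho => hn.
rewrite !dc0 // !dch //.
case: ifP => h1; case: ifP => h2; case: ifP => h3; case: ifP => h4; lia.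
Qed.
End DC.

Lemma modS n i : i < n -> i.+1 %% n = if i.+1 == n then 0 else i.+1.
Proof. move=> lt; case: eqP => [->|h]; first by rewrite modnn. rewrite modn_small //; lia. Qed.

Lemma cyc_edge n (i w t : 'I_n): cycle_rel i w -> dc n i t <= (dc n w t).+1.
Proof.
have := ltn_ord i; have := ltn_ord w; have := ltn_ord t.
move=> ht hw hi.
rewrite /cycle_rel => /orP[] /eqP; rewrite modS //; case: eqP => H1 H2; rewrite /dc /absd; lia.
Qed.

Lemma cyc_sym n (i w : 'I_n): cycle_rel i w = cycle_rel w i.
Proof. by rewrite /cycle_rel orbC. Qed.

Lemma cyc_z n (i t : 'I_n): dc n i t = 0 -> i = t.
Proof. have := ltn_ord i; have := ltn_ord t => ??; rewrite /dc /absd => h; apply/val_inj => /=; lia. Qed.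

Lemma cyc_lt n (i t : 'I_n): dc n i t < n.
Proof. have := ltn_ord i; have := ltn_ord t => ??; rewrite /dc /absd; lia. Qed.

Lemma cyc_nb n (i t : 'I_n) m : dc n i t = m.+1 ->
  exists w : 'I_n, cycle_rel i w && (dc n w t == m).
Proof.
move=> H; have [j [hj hd hr]] := @cyc_nb_nat n i t m (ltn_ord i) (ltn_ord t) H.
exists (Ordinal hj); rewrite /= hd eqxx andbT /cycle_rel /=.
have hi := ltn_ord i.
case: hr => [e|[h1 ->]|hr|[h1 h2]].
- apply/orP; left; rewrite e modn_small //; lia.
- by rewrite h1 modnn.
- apply/orP; right; rewrite modn_small ?hr //; lia.
- by rewrite h1 modnn h2 orbT.
Qed.

Lemma pth_edge k (i w t : 'I_k): path_rel i w -> absd i t <= (absd w t).+1.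
Proof. rewrite /path_rel /absd => /orP[] /eqP; lia. Qed.

Lemma pth_nb k (i t : 'I_k) m : absd i t = m.+1 ->
  exists w : 'I_k, path_rel i w && (absd w t == m).
Proof.
have hi := ltn_ord i; have ht := ltn_ord t => H.
have sP : (if i < t then i.+1 else i.-1) < k by case: ifP; lia.
exists (Ordinal sP); rewrite /path_rel /=; move: H; rewrite /absd; case: ifP => /idP h H.
  apply/andP; split; [apply/orP; left|apply/eqP]; lia.
apply/andP; split; [apply/orP; right; apply/eqP|apply/eqP]; lia.
Qed.

Section Prod.
Variables n k : nat.
Definition PD (x y : 'I_n * 'I_k) := dc n x.1 y.1 + absd x.2 y.2.
Definition E := cart_rel (@cycle_rel n) (@path_rel k).

Lemma gdist_prod x y : gdist E x y = PD x y.
Proof.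
case: y => [y1 y2].
apply: gdistE.
- by rewrite /PD /dc /absd !subnn /= minnC.
- case=> [x1 x2]; rewrite /PD /= => h.
  have h1 : dc n x1 y1 = 0 by lia.
  have h2 : absd x2 y2 = 0 by lia.
  rewrite (@cyc_z _ _ _ h1); congr pair; apply/val_inj => /=; move: h2; rewrite /absd; lia.
- case => [u1 u2] [w1 w2]; rewrite /E /cart_rel /PD /= => /orP[] /andP[/eqP <- h].
  + by rewrite -addSn leq_add2r; apply: cyc_edge.
  + by rewrite -addnS leq_add2l; apply: pth_edge.
- case => [u1 u2] m; rewrite /PD /=.
  case: (posnP (dc n u1 y1)) => h0 H.
  + have [w /andP[hw /eqP hw2]] := @pth_nb k u2 y2 m ltac:(lia).
    exists (u1, w); rewrite /E /cart_rel /= eqxx hw orbT /=; apply/eqP; lia.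
  + have [w /andP[hw /eqP hw2]] := @cyc_nb n u1 y1 (dc n u1 y1).-1 ltac:(lia).
    exists (w, u2); rewrite /E /cart_rel /= eqxx hw /=; apply/eqP; lia.
- case => [u1 u2]; rewrite card_prod !card_ord /PD /=.
  have := @cyc_lt _ u1 y1; have := ltn_ord u2; have := ltn_ord y2.
  rewrite /absd; nia.
Qed.
End Prod.

Section Main.
Variables n k : nat.
Hypotheses (hn : 3 <= n) (ho : odd n) (hk : 3 <= k).

Lemma n0 : 0 < n. Proof. lia. Qed.
Lemma n1 : 1 < n. Proof. lia. Qed.
Lemma k0 : 0 < k. Proof. lia. Qed.
Lemma k1 : 1 < k. Proof. lia. Qed.
Lemma kl : k.-1 < k. Proof. lia. Qed.
Lemma kl2 : k.-2 < k. Proof. lia. Qed.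
Lemma nh : n./2 < n. Proof. have := odd_double_half n; rewrite ho -muln2; lia. Qed.

Definition Q3 : {set 'I_n * 'I_k} :=
  [set (Ordinal n0, Ordinal k0); (Ordinal n0, Ordinal kl); (Ordinal nh, Ordinal k0)].

Lemma Q3_card : #|Q3| = 3.
Proof.
rewrite /Q3 -setUA cardsU1 cards2 !inE !xpair_eqE /=.
have h1 : (0 == n./2) = false by apply/negbTE; have := odd_double_half n; rewrite ho -muln2; lia.
have h2 : (0 == k.-1) = false by apply/negbTE; lia.
by rewrite -!val_eqE /= h1 h2 eqxx /=.
Qed.

Lemma Q3_dr : doubly_resolving (E n k) Q3.
Proof.
case=> [x1 x2] [y1 y2] hxy [lam H].
have e1 : _ := H (Ordinal n0, Ordinal k0) ltac:(by rewrite !inE eqxx ?orbT).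
have e2 : _ := H (Ordinal n0, Ordinal kl) ltac:(by rewrite !inE eqxx ?orbT).
have e3 : _ := H (Ordinal nh, Ordinal k0) ltac:(by rewrite !inE eqxx ?orbT).
move: e1 e2 e3; rewrite !gdist_prod /PD /= => e1 e2 e3.
have ex2 : x2 = y2 :> nat.
  have := ltn_ord x2; have := ltn_ord y2; move: e1 e2; rewrite /absd; lia.
have ex1 : x1 = y1 :> nat.
  apply: (@ginj n _ _ ho (ltn_ord x1) (ltn_ord y1)).
  move: e1 e3; rewrite ex2; lia.
move: hxy; rewrite xpair_eqE.
have -> : x1 = y1 by apply/val_inj.
have -> : x2 = y2 by apply/val_inj.
by rewrite !eqxx.
Qed.

Lemma key_sub (a1 b1 : 'I_n) (a2 b2 : 'I_k) : a2 = 0 :> nat -> b2 = k.-1 :> nat -> a1 != b1 ->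
  exists x y : 'I_n * 'I_k, x != y /\ PD n k x (a1, a2) + PD n k y (b1, b2) = PD n k y (a1, a2) + PD n k x (b1, b2).
Proof.
move=> ha hb hab.
have hpos : 0 < dc n b1 a1.
  rewrite lt0n; apply/eqP => /(@cyc_z n) h; by move: hab; rewrite h eqxx.
have [w /andP[hw /eqP hw2]] := @cyc_nb n b1 a1 (dc n b1 a1).-1 ltac:(lia).
have e0 : dc n b1 b1 = 0 by rewrite /dc /absd; lia.
have hwb : dc n w b1 <= 1.
  have := @cyc_edge n w b1 b1; rewrite cyc_sym => /(_ hw).
  by rewrite e0.
exists (b1, Ordinal k0), (w, Ordinal k1); split.
  by rewrite xpair_eqE -!val_eqE /= andbF.
rewrite /PD /= ha hb.
rewrite e0.
have hwb1 : 0 < dc n w b1.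
  rewrite lt0n; apply/eqP => /(@cyc_z n) h; move: hw2; rewrite h; lia.
rewrite /absd; lia.
Qed.

Lemma key (a b : 'I_n * 'I_k) :
  exists x y : 'I_n * 'I_k, x != y /\ PD n k x a + PD n k y b = PD n k y a + PD n k x b.
Proof.
case: a b => [a1 a2] [b1 b2].
have ha := ltn_ord a2; have hb := ltn_ord b2.
case: (eqVneq a1 b1) => hab.
  exists (Ordinal n0, Ordinal k0), (Ordinal n1, Ordinal k0); split.
    by rewrite xpair_eqE -!val_eqE /=.
  rewrite /PD /= hab; lia.
case: (leqP a2 k.-2) => h1; case: (leqP b2 k.-2) => h2;
  case: (posnP a2) => h3; case: (posnP b2) => h4.
all: first
  [ (exists (Ordinal n0, Ordinal kl), (Ordinal n0, Ordinal kl2); split;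
      [rewrite xpair_eqE -!val_eqE /=; apply/eqP; lia | rewrite /PD /= /absd; lia])
  | (exists (Ordinal n0, Ordinal k0), (Ordinal n0, Ordinal k1); split;
      [by rewrite xpair_eqE -!val_eqE /= | rewrite /PD /= /absd; lia])
  | (apply: key_sub => //; lia)
  | (have [x [y [hxy e]]] := @key_sub b1 a1 b2 a2 ltac:(lia) ltac:(lia) ltac:(by rewrite eq_sym);
      exists x, y; split => //; lia) ].
Qed.
End Main.

Theorem theorem3p1 (n k : nat) :
  3 <= n -> odd n -> 3 <= k ->
  psi_eq (cart_rel (@cycle_rel n) (@path_rel k)) 3.
Proof.
move=> hn ho hk; split.
  exists (Q3 n k hn ho hk); split; [exact: Q3_dr | exact: Q3_card].
move=> Q HQ; rewrite leqNgt; apply/negP => hlt.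
pose x0 : 'I_n * 'I_k := (Ordinal (n0 n k hn ho hk), Ordinal (k0 n k hn ho hk)).
have hs : size (enum Q) <= 2 by rewrite -cardE; lia.
pose a := nth x0 (enum Q) 0; pose b := nth x0 (enum Q) 1.
have hab : forall q, q \in Q -> q = a \/ q = b.
  move=> q hq; have hq' : q \in enum Q by rewrite mem_enum.
  have hi := index_mem q (enum Q); rewrite hq' in hi.
  have := nth_index x0 hq'.
  case: (index q (enum Q)) hi => [|[|m]] hi <-; [by left|by right|by have := leq_trans hi hs].
have [x [y [hxy e]]] := key n k hn ho hk a b.
apply: (HQ x y hxy); exists ((gdist (E n k) x a)%:Z - (gdist (E n k) y a)%:Z)%R.
move=> q /hab [] ->; rewrite // !gdist_prod. lia.
Qed.
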